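(* Let $n$ and $k$ be odd integers with $k\ge3$ and $n>2k+1$. Then $$\chi_c(\mathrm{Pet}(n,k))\ \le\ \frac{2n}{n-k}.$$
   Context: For integers $n,k$ with $2<2k\le n$, the generalized Petersen graph $\mathrm{Pet}(n,k)$ has vertex set $\{u_0,\dots,u_{n-1}\}\cup\{v_0,\dots,v_{n-1}\}$ and edge set $\{u_iu_{i+1}\}\cup\{u_iv_i\}\cup\{v_iv_{i+k}\}$, indices modulo $n$. For integers $p\ge 2q\ge 2$, the circular complete graph $K_{p/q}$ has vertex set $\{0,\dots,p-1\}$ with $i\sim j$ iff $q\le|i-j|\le p-q$; the circular chromatic number $\chi_c(G)$ is the minimum of $p/q$ over all such $p,q$ for which $G$ admits a homomorphism to $K_{p/q}$. *)

(* Defs.v *)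
From mathcomp Require Import all_boot all_order all_algebra.
Set Implicit Arguments. Unset Strict Implicit. Unset Printing Implicit Defensive.
Import Order.TTheory GRing.Theory Num.Theory.

(* Vertices of Pet(n,k): inl i = u_i, inr i = v_i, i in {0,...,n-1}. *)
Definition pet_vertex (n : nat) : finType := ('I_n + 'I_n)%type.

Definition pet_adj (n k : nat) : rel (pet_vertex n) :=
  fun x y =>
    match x, y with
    | inl i, inl j => (val j == (val i + 1) %% n) || (val i == (val j + 1) %% n)
    | inl i, inr j => val i == val j
    | inr i, inl j => val i == val j
    | inr i, inr j => (val j == (val i + k) %% n) || (val i == (val j + k) %% n)
    end.

Arguments pet_adj n k : clear implicits.

Definition natdist (i j : nat) : nat := if i <= j then j - i else i - j.

Definition circ_adj (p q : nat) : rel 'I_p :=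
  fun i j => (q <= natdist i j) && (natdist i j <= p - q).

Definition is_hom (V : finType) (adj : rel V) (p q : nat) (f : V -> 'I_p) : Prop :=
  forall x y, adj x y -> circ_adj q (f x) (f y).

(* "chi_c(G) <= r": chi_c(G) is the minimum of p/q over p >= 2q >= 2 such that
   G -> K_{p/q}; so chi_c(G) <= r iff some admissible p/q with G -> K_{p/q}
   satisfies p/q <= r. *)
Definition chi_c_le (V : finType) (adj : rel V) (r : rat) : Prop :=
  exists (p q : nat) (f : V -> 'I_p),
    [/\ (1 <= q)%N, (2 * q <= p)%N, is_hom adj q f & ((p%:Q / q%:Q) <= r)%R].

(* Main.v *)
Require Import Defs.
From mathcomp Require Import all_boot all_order all_algebra.
From mathcomp Require Import zify.

Lemma natdistC a b : natdist a b = natdist b a.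
Proof. rewrite /natdist; case: (leqP a b); case: (leqP b a); lia. Qed.

Lemma circ_mod p q A B d : 0 < p -> q <= d -> d <= p - q ->
  B = A + d %[mod p] -> q <= natdist (A %% p) (B %% p) <= p - q.
Proof.
move=> p0 qd dp; rewrite -modnDml => ->.
have ha : A %% p < p by rewrite ltn_pmod.
move: (A %% p) ha => a ha.
case: (ltnP (a + d) p) => h.
  rewrite modn_small // /natdist; case: ifP; lia.
have -> : a + d = (a + d - p) + p by lia.
rewrite modnDr modn_small; last lia.
rewrite /natdist; case: ifP; lia.
Qed.

Lemma keymod n x : odd n -> (n - 1) * (x %% n) = (n - 1) * x %[mod 2 * n].
Proof.
move=> on.
have [m hm] : exists m, n - 1 = m * 2.
  exists n./2; move: (odd_double_half n); rewrite on -muln2; lia.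
rewrite {2}(divn_eq x n) hm mulnDr.
have -> : m * 2 * (x %/ n * n) = (m * (x %/ n)) * (2 * n) by lia.
by rewrite modnMDl.
Qed.

Lemma ord_mod_lt n (i : 'I_n) m : m %% (2 * n) < 2 * n.
Proof. by rewrite ltn_pmod //; have := ltn_ord i; lia. Qed.

Definition fcol n (x : pet_vertex n) : 'I_(2 * n) :=
  match x with
  | inl i => Ordinal (@ord_mod_lt n i ((n - 1) * i))
  | inr i => Ordinal (@ord_mod_lt n i ((n - 1) * i + n))
  end.

Theorem corollary6 (n k : nat) :
  odd n -> odd k -> (3 <= k)%N -> (2 * k + 1 < n)%N ->
  chi_c_le (pet_adj n k) ((2 * n)%N%:Q / (n - k)%N%:Q)%R.
Proof.
move=> on ok k3 kn.
exists (2 * n), (n - k), (@fcol n); split; first lia; first lia; last by [].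
have p0 : 0 < 2 * n by lia.
have hk : (n - 1) * k = n - k + k./2 * (2 * n).
  move: (odd_double_half k); rewrite ok -muln2 => hk2.
  rewrite -{1}hk2; nia.
have uu : forall i j : nat, j = (i + 1) %% n ->
   n - k <= natdist (((n-1) * i) %% (2*n)) (((n-1) * j) %% (2*n)) <= 2 * n - (n - k).
  move=> i j ->; apply: (@circ_mod _ _ _ _ (n - 1)) => //; try lia.
  by rewrite keymod // mulnDr muln1.
have vv : forall i j : nat, j = (i + k) %% n ->
   n - k <= natdist (((n-1) * i + n) %% (2*n)) (((n-1) * j + n) %% (2*n)) <= 2 * n - (n - k).
  move=> i j ->; apply: (@circ_mod _ _ _ _ (n - k)) => //; try lia.
  rewrite -modnDml keymod // modnDml mulnDr hk.
  have -> : (n - 1) * i + (n - k + k./2 * (2 * n)) + n = k./2 * (2 * n) + ((n-1) * i + n + (n - k)) by lia.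
  by rewrite modnMDl.
have uv : forall i : nat,
   n - k <= natdist (((n-1) * i) %% (2*n)) (((n-1) * i + n) %% (2*n)) <= 2 * n - (n - k).
  move=> i; apply: (@circ_mod _ _ _ _ (n)) => //; lia.
move=> [i|i] [j|j] /=; rewrite /circ_adj /=.
- case/orP=> /eqP h; first exact: uu.
  by rewrite natdistC; apply: uu.
- by move/eqP=> h; rewrite h; apply: uv.
- by move/eqP=> h; rewrite natdistC h; apply: uv.
- case/orP=> /eqP h; first exact: vv.
  by rewrite natdistC; apply: vv.
Qed.
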